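(* Let $f:X\to Y$ be a local homeomorphism between metric spaces, where $X$ is complete and $Y$ is path-connected and locally $\mathcal R$-contractible. Suppose that (1) for every bounded subset $B$ of $X$, $\inf_{x\in B}D_x^-f>0$; and (2) for some $y_0\in Y$ and $x_0\in X$, $d(f(x),y_0)\to\infty$ as $d(x,x_0)\to\infty$. Then $f$ is a covering projection.
   Context: A path $p:[0,1]\to Y$ is rectifiable if its length $\sup\sum_i d(p(t_i),p(t_{i+1}))$ (over partitions of $[0,1]$) is finite. $Y$ is locally $\mathcal R$-contractible if every $y_0\in Y$ has an open neighborhood $U$ with a continuous homotopy $H:U\times[0,1]\to U$ such that $H(y_0,t)=y_0$ for all $t$, $H(y,0)=y_0$, $H(y,1)=y$ for all $y\in U$, and each path $t\mapsto H(y,t)$ is rectifiable. For non-isolated $x\in X$, $D_x^-f=\liminf_{z\to x,\,z\neq x}\frac{d(f(z),f(x))}{d(z,x)}$; $X$ is assumed to have no isolated points. *)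

(* Defs.v *)
From Stdlib Require Import Reals Lra.
From Coquelicot Require Import Rbar Lub.
Open Scope R_scope.

Record MetricSpace := MkMetricSpace {
  mcarrier :> Type;
  mdist : mcarrier -> mcarrier -> R;
  mdist_ge0 : forall x y, 0 <= mdist x y;
  mdist_eq0 : forall x y, mdist x y = 0 <-> x = y;
  mdist_sym : forall x y, mdist x y = mdist y x;
  mdist_tri : forall x y z, mdist x z <= mdist x y + mdist y z
}.
Arguments mdist {m} x y.

Definition m_open {X : MetricSpace} (U : X -> Prop) : Prop :=
  forall x, U x -> exists eps, 0 < eps /\ forall z, mdist x z < eps -> U z.

Definition m_continuous_on {X Y : MetricSpace} (A : X -> Prop) (f : X -> Y) : Prop :=
  forall x, A x -> forall eps, 0 < eps -> exists delta, 0 < delta /\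
    forall z, A z -> mdist x z < delta -> mdist (f x) (f z) < eps.

Definition m_continuous {X Y : MetricSpace} (f : X -> Y) : Prop := m_continuous_on (fun _ => True) f.

Definition homeo_onto {X Y : MetricSpace} (f : X -> Y) (U : X -> Prop) (V : Y -> Prop) : Prop :=
  exists g : Y -> X,
    (forall x, U x -> V (f x) /\ g (f x) = x) /\
    (forall y, V y -> U (g y) /\ f (g y) = y) /\
    m_continuous_on U f /\ m_continuous_on V g.

Definition local_homeomorphism {X Y : MetricSpace} (f : X -> Y) : Prop :=
  forall x, exists (U : X -> Prop) (V : Y -> Prop),
    U x /\ m_open U /\ m_open V /\ homeo_onto f U V.

(* covering projection (Spanier): continuous, surjective, and every point of Y
   has an open neighbourhood V evenly covered by f *)
Definition covering_projection {X Y : MetricSpace} (f : X -> Y) : Prop :=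
  m_continuous f /\ (forall y, exists x, f x = y) /\
  forall y, exists (V : Y -> Prop), V y /\ m_open V /\
    exists (I : Type) (W : I -> X -> Prop),
      (forall i, m_open (W i)) /\
      (forall i j x, W i x -> W j x -> i = j) /\
      (forall x, V (f x) <-> exists i, W i x) /\
      (forall i, homeo_onto f (W i) V).

Definition m_complete (X : MetricSpace) : Prop :=
  forall u : nat -> X,
    (forall eps, 0 < eps -> exists N, forall m n, (N <= m)%nat -> (N <= n)%nat ->
        mdist (u m) (u n) < eps) ->
    exists l, forall eps, 0 < eps -> exists N, forall n, (N <= n)%nat -> mdist (u n) l < eps.

Definition no_isolated_points (X : MetricSpace) : Prop :=
  forall (x : X) eps, 0 < eps -> exists z, z <> x /\ mdist z x < eps.

Definition m_bounded {X : MetricSpace} (B : X -> Prop) : Prop :=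
  exists M, forall a b, B a -> B b -> mdist a b <= M.

(* lower Dini-type derivative
   D_x^- f = liminf_{z -> x, z <> x} d(f z, f x) / d(z, x)
           = sup_{delta > 0} inf_{0 < d(z,x) < delta} d(f z, f x) / d(z, x) *)
Definition lower_deriv {X Y : MetricSpace} (f : X -> Y) (x : X) : Rbar :=
  Rbar_lub (fun v => exists delta, 0 < delta /\
    v = Rbar_glb (fun w => exists z, z <> x /\ mdist z x < delta /\
                     w = Finite (mdist (f z) (f x) / mdist z x))).


Section PathDefs.
Variable Y : MetricSpace.

Definition unit_I (t : R) : Prop := 0 <= t <= 1.

Definition R_metric : MetricSpace.
Proof.
  refine (MkMetricSpace R (fun a b => Rabs (a - b)) _ _ _ _).
  - intros; apply Rabs_pos.
  - intros x y; split; intro H.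
    + destruct (Req_dec (x - y) 0) as [E|E]; [lra|].
      exfalso; apply (Rabs_no_R0 _ E); exact H.
    + subst; rewrite Rminus_diag; apply Rabs_R0.
  - intros; apply Rabs_minus_sym.
  - intros x y z; replace (x - z) with ((x - y) + (y - z)) by ring; apply Rabs_triang.
Defined.

(* a path: a map [0,1] -> Y (represented on R), continuous on [0,1] *)
Definition is_path (p : R -> Y) : Prop := m_continuous_on (X:=R_metric) unit_I p.

Definition path_connected : Prop :=
  forall y1 y2 : Y, exists p : R -> Y, is_path p /\ p 0 = y1 /\ p 1 = y2.

Fixpoint poly_sum (p : R -> Y) (t : nat -> R) (n : nat) : R :=
  match n with
  | O => 0
  | S k => poly_sum p t k + mdist (p (t k)) (p (t (S k)))
  end.

Definition rectifiable (p : R -> Y) : Prop :=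
  exists M, forall (n : nat) (t : nat -> R),
    t O = 0 -> t n = 1 -> (forall i, (i < n)%nat -> t i <= t (S i)) ->
    poly_sum p t n <= M.

Definition locally_R_contractible : Prop :=
  forall y0 : Y, exists (U : Y -> Prop) (H : Y -> R -> Y),
    U y0 /\ m_open U /\
    (forall y t, U y -> unit_I t -> U (H y t)) /\
    (forall y t, U y -> unit_I t -> forall eps, 0 < eps -> exists delta, 0 < delta /\
       forall y' t', U y' -> unit_I t' -> mdist y y' < delta -> Rabs (t - t') < delta ->
         mdist (H y t) (H y' t') < eps) /\
    (forall t, unit_I t -> H y0 t = y0) /\
    (forall y, U y -> H y 0 = y0 /\ H y 1 = y) /\
    (forall y, U y -> rectifiable (H y)).

End PathDefs.

(* Main.v *)
Require Import Defs.
From Stdlib Require Import Reals.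
From Coquelicot Require Import Rbar Lub.
From Stdlib Require Import Lra Lia Classical ClassicalEpsilon ProofIrrelevance.
Open Scope R_scope.

Lemma CI (p q : R) (P : R -> Prop) : p <= q ->
  (forall s, p <= s <= q -> (forall u, p <= u < s -> P u) ->
     exists eta, 0 < eta /\ forall u, p <= u <= q -> u < s + eta -> P u) ->
  forall u, p <= u <= q -> P u.
Proof.
  intros Hpq Hyp.
  set (E := fun s => p <= s <= q /\ forall u, p <= u <= s -> P u).
  assert (Ep : E p).
  { destruct (Hyp p) as [eta [He Hp]]; [lra| intros; lra |].
    split; [lra|]. intros u Hu. apply Hp; lra. }
  assert (Hb : bound E). { exists q. intros s [Hs _]. lra. }
  destruct (completeness E Hb (ex_intro _ p Ep)) as [m [Hub Hlub]].
  assert (Hm1 : p <= m) by (apply Hub; exact Ep).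
  assert (Hm2 : m <= q) by (apply Hlub; intros s [Hs _]; lra).
  assert (Hbel : forall u, p <= u < m -> P u).
  { intros u Hu. apply NNPP; intro HnP.
    assert (m <= u); [|lra].
    apply Hlub. intros s [Hs HsP]. destruct (Rle_lt_dec s u) as [|Hsu]; [lra|].
    exfalso; apply HnP, HsP; lra. }
  destruct (Hyp m (conj Hm1 Hm2) Hbel) as [eta [He HP]].
  destruct (Req_dec m q) as [Hmq|Hmq].
  - subst m. intros u Hu. apply HP; lra.
  - exfalso.
    assert (E (Rmin (m + eta/2) q)).
    { split. split; [apply Rmin_case; lra | apply Rmin_r].
      intros u Hu. apply HP. split; [lra| assert (Rmin (m + eta / 2) q <= q) by apply Rmin_r; lra].
      assert (Rmin (m + eta / 2) q <= m + eta/2) by apply Rmin_l; lra. }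
    assert (Rmin (m + eta / 2) q <= m) by (apply Hub; auto).
    revert H0. apply Rmin_case; lra.
Qed.

Lemma md0 (X : MetricSpace) (x : X) : mdist x x = 0.
Proof. apply mdist_eq0; reflexivity. Qed.

Lemma md_small_eq (X : MetricSpace) (a b : X) : (forall eps, 0 < eps -> mdist a b < eps) -> a = b.
Proof.
  intros H. apply mdist_eq0. destruct (mdist_ge0 _ a b) as [Hl|He]; auto.
  specialize (H _ Hl). lra.
Qed.

Lemma cont_sub (X Y : MetricSpace) (A B : X -> Prop) (g : X -> Y) :
  (forall x, A x -> B x) -> m_continuous_on B g -> m_continuous_on A g.
Proof.
  intros HAB Hc x Ax eps He. destruct (Hc x (HAB x Ax) eps He) as [d [Hd Hz]].
  exists d; split; auto.
Qed.

Lemma lh_at (X Y : MetricSpace) (f : X -> Y) : local_homeomorphism f -> forall x,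
  exists (U : X -> Prop) (V : Y -> Prop) (g : Y -> X), U x /\ m_open U /\ m_open V /\
    (forall z, U z -> V (f z) /\ g (f z) = z) /\
    (forall y, V y -> U (g y) /\ f (g y) = y) /\
    m_continuous_on U f /\ m_continuous_on V g.
Proof.
  intros Hl x. destruct (Hl x) as [U [V [Ux [HU [HV [g [H1 [H2 [H3 H4]]]]]]]]].
  exists U, V, g. tauto.
Qed.

Lemma lh_cont (X Y : MetricSpace) (f : X -> Y) : local_homeomorphism f -> m_continuous f.
Proof.
  intros Hl x _ eps He.
  destruct (lh_at X Y f Hl x) as [U [V [g [Ux [HU [HV [H1 [H2 [H3 H4]]]]]]]]].
  destruct (HU x Ux) as [r [Hr Hb]].
  destruct (H3 x Ux eps He) as [d [Hd Hz]].
  exists (Rmin d r). split. apply Rmin_case; lra.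
  intros z _ Hxz. apply Hz. apply Hb. assert (Rmin d r <= r) by apply Rmin_r; lra.
  assert (Rmin d r <= d) by apply Rmin_l; lra.
Qed.

Lemma fcont_at (X Y : MetricSpace) (f : X -> Y) : local_homeomorphism f -> forall x eps, 0 < eps ->
  exists d, 0 < d /\ forall z, mdist x z < d -> mdist (f x) (f z) < eps.
Proof.
  intros Hl x eps He. destruct (lh_cont X Y f Hl x I eps He) as [d [Hd Hz]].
  exists d; split; auto.
Qed.

Lemma cont_comp (Z X Y : MetricSpace) (A : Z -> Prop) (h : Z -> Y) (V : Y -> Prop) (g : Y -> X) :
  m_continuous_on A h -> (forall t, A t -> V (h t)) -> m_continuous_on V g ->
  m_continuous_on A (fun t => g (h t)).
Proof.
  intros Hh HV Hg t At eps He.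
  destruct (Hg (h t) (HV t At) eps He) as [d1 [Hd1 H1]].
  destruct (Hh t At d1 Hd1) as [d2 [Hd2 H2]].
  exists d2. split; auto.
Qed.

Definition rcont {Y : MetricSpace} (A : R -> Prop) (a : R -> Y) := m_continuous_on (X:=R_metric) A a.

Lemma rcont_at {Y : MetricSpace} (A : R -> Prop) (a : R -> Y) : rcont A a ->
  forall s, A s -> forall eps, 0 < eps -> exists d, 0 < d /\ forall u, A u -> Rabs (s - u) < d -> mdist (a s) (a u) < eps.
Proof. intros H s As eps He. exact (H s As eps He). Qed.

Lemma rcont_intro {Y : MetricSpace} (A : R -> Prop) (a : R -> Y) :
  (forall s, A s -> forall eps, 0 < eps -> exists d, 0 < d /\ forall u, A u -> Rabs (s - u) < d -> mdist (a s) (a u) < eps) -> rcont A a.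
Proof. intros H s As eps He. exact (H s As eps He). Qed.

Lemma rcont_sub {Y : MetricSpace} (A B : R -> Prop) (a : R -> Y) :
  (forall x, A x -> B x) -> rcont B a -> rcont A a.
Proof. apply (cont_sub R_metric Y A B a). Qed.

Lemma lift_unique (X Y : MetricSpace) (f : X -> Y) : local_homeomorphism f ->
  forall p q (a b : R -> X), p <= q -> rcont (fun t => p <= t <= q) a -> rcont (fun t => p <= t <= q) b ->
  (forall u, p <= u <= q -> f (a u) = f (b u)) -> a p = b p -> forall u, p <= u <= q -> a u = b u.
Proof.
  intros Hl p q a b Hpq Ha Hb Hf H0.
  apply (CI p q (fun u => a u = b u) Hpq).
  intros s Hs Hbel.
  assert (Hss : a s = b s).
  { destruct (Req_dec s p) as [->|Hsp]; auto.
    apply md_small_eq. intros eps He.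
    destruct (rcont_at _ _ Ha s Hs (eps/2)) as [d1 [Hd1 H1]]; [lra|].
    destruct (rcont_at _ _ Hb s Hs (eps/2)) as [d2 [Hd2 H2]]; [lra|].
    set (u := Rmax p (s - Rmin d1 d2 / 2)).
    assert (Hm1 : Rmin d1 d2 <= d1) by apply Rmin_l.
    assert (Hm2 : Rmin d1 d2 <= d2) by apply Rmin_r.
    assert (Hm0 : 0 < Rmin d1 d2) by (apply Rmin_case; lra).
    assert (Hu1 : p <= u) by apply Rmax_l.
    assert (Hu2 : u < s) by (unfold u; apply Rmax_case; lra).
    assert (Hu3 : s - Rmin d1 d2 / 2 <= u) by apply Rmax_r.
    assert (Hab : Rabs (s - u) < Rmin d1 d2) by (rewrite Rabs_right; lra).
    specialize (H1 u ltac:(lra) ltac:(lra)). specialize (H2 u ltac:(lra) ltac:(lra)).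
    rewrite (Hbel u ltac:(lra)) in H1.
    pose proof (mdist_tri _ (a s) (b u) (b s)). rewrite (mdist_sym _ (b u) (b s)) in H. lra. }
  destruct (lh_at X Y f Hl (a s)) as [U [V [g [Ux [HU [HV [H1 [H2 [H3 H4]]]]]]]]].
  destruct (HU _ Ux) as [r [Hr Hball]].
  destruct (rcont_at _ _ Ha s Hs r Hr) as [e1 [He1 E1]].
  destruct (rcont_at _ _ Hb s Hs r Hr) as [e2 [He2 E2]].
  exists (Rmin e1 e2). split; [apply Rmin_case; lra|].
  intros u Hu Hu2.
  destruct (Rlt_dec u s) as [Hus|Hus]; [apply Hbel; lra|].
  assert (Hm1 : Rmin e1 e2 <= e1) by apply Rmin_l.
  assert (Hm2 : Rmin e1 e2 <= e2) by apply Rmin_r.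
  assert (Hab : Rabs (s - u) < Rmin e1 e2) by (rewrite Rabs_left1; lra).
  assert (Ua : U (a u)) by (apply Hball, E1; auto; lra).
  assert (Ub : U (b u)) by (apply Hball; rewrite Hss; apply E2; auto; lra).
  rewrite <- (proj2 (H1 _ Ua)), <- (proj2 (H1 _ Ub)), Hf; auto.
Qed.

Lemma rbar_lub_prop (E : Rbar -> Prop) : Rbar_is_lub E (Rbar_lub E).
Proof. unfold Rbar_lub. destruct (Rbar_ex_lub E); auto. Qed.
Lemma rbar_glb_prop (E : Rbar -> Prop) : Rbar_is_glb E (Rbar_glb E).
Proof. unfold Rbar_glb. destruct (Rbar_ex_glb E); auto. Qed.

Lemma deriv_est (X Y : MetricSpace) (f : X -> Y) (x : X) (c : R) :
  Rbar_lt (Finite c) (lower_deriv f x) ->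
  exists d, 0 < d /\ forall z, mdist z x < d -> c * mdist z x <= mdist (f z) (f x).
Proof.
  intros Hc. unfold lower_deriv in Hc.
  destruct (rbar_lub_prop (fun v => exists delta, 0 < delta /\
    v = Rbar_glb (fun w => exists z, z <> x /\ mdist z x < delta /\
                     w = Finite (mdist (f z) (f x) / mdist z x)))) as [Hub Hl].
  set (L := Rbar_lub _) in *.
  assert (Hex : exists v, (exists delta, 0 < delta /\
    v = Rbar_glb (fun w => exists z, z <> x /\ mdist z x < delta /\
                     w = Finite (mdist (f z) (f x) / mdist z x))) /\ Rbar_lt (Finite c) v).
  { apply NNPP; intro Hn.
    assert (Rbar_le L (Finite c)).
    { apply Hl. intros v Hv. apply Rbar_not_lt_le. intro Hlt. apply Hn. exists v; auto. }
    apply (Rbar_le_not_lt _ _ H Hc). }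
  destruct Hex as [v [[d [Hd ->]] Hv]].
  exists d; split; auto.
  intros z Hz. destruct (classic (z = x)) as [->|Hzx].
  - rewrite md0. rewrite Rmult_0_r. apply mdist_ge0.
  - destruct (rbar_glb_prop (fun w => exists z, z <> x /\ mdist z x < d /\
                     w = Finite (mdist (f z) (f x) / mdist z x))) as [Hlb _].
    specialize (Hlb _ (ex_intro _ z (conj Hzx (conj Hz eq_refl)))).
    set (G := Rbar_glb _) in *.
    assert (Hpos : 0 < mdist z x).
    { destruct (mdist_ge0 _ z x) as [|He]; auto. exfalso. apply Hzx. apply mdist_eq0. auto. }
    assert (Hr : c < mdist (f z) (f x) / mdist z x).
    { destruct G; simpl in *; try contradiction; lra. }
    apply Rlt_le. apply (Rmult_lt_compat_r (mdist z x)) in Hr; auto.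
    unfold Rdiv in Hr. rewrite Rmult_assoc, Rinv_l in Hr; lra.
Qed.

Lemma bounded_c (X Y : MetricSpace) (f : X -> Y) (B : X -> Prop) :
  Rbar_lt (Finite 0) (Rbar_glb (fun v => exists x, B x /\ v = lower_deriv f x)) ->
  exists c, 0 < c /\ forall x, B x -> Rbar_lt (Finite c) (lower_deriv f x).
Proof.
  intros H.
  destruct (rbar_glb_prop (fun v => exists x, B x /\ v = lower_deriv f x)) as [Hlb _].
  set (G := Rbar_glb _) in *.
  assert (Hc : exists c, 0 < c /\ Rbar_lt (Finite c) G).
  { destruct G as [g| |]; simpl in H.
    - exists (g/2). simpl. split; lra.
    - exists 1. simpl. split; auto; lra.
    - contradiction. }
  destruct Hc as [c [Hc HcG]]. exists c. split; auto.
  intros x Bx. specialize (Hlb _ (ex_intro _ x (conj Bx eq_refl))).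
  eapply Rbar_lt_le_trans; eauto.
Qed.

Lemma ps_ext (Y : MetricSpace) (p : R -> Y) t t' n :
  (forall i, (i <= n)%nat -> t i = t' i) -> poly_sum Y p t n = poly_sum Y p t' n.
Proof.
  induction n; intros H; simpl; auto.
  rewrite IHn by (intros; apply H; lia). rewrite (H n), (H (S n)) by lia. reflexivity.
Qed.

Lemma ps_snoc (Y : MetricSpace) (p : R -> Y) t n s :
  poly_sum Y p (fun i => if Nat.leb i n then t i else s) (S n) = poly_sum Y p t n + mdist (p (t n)) (p s).
Proof.
  cbn [poly_sum]. rewrite Nat.leb_refl.
  replace (Nat.leb (S n) n) with false by (symmetry; apply Nat.leb_gt; lia).
  f_equal. apply ps_ext. intros i Hi. replace (Nat.leb i n) with true; auto.
  symmetry; apply Nat.leb_le; auto.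
Qed.

Lemma ps_comp (Y : MetricSpace) (p : R -> Y) h t n :
  poly_sum Y (fun x => p (h x)) t n = poly_sum Y p (fun i => h (t i)) n.
Proof. induction n; simpl; auto. rewrite IHn; auto. Qed.

Lemma ps_shift (Y : MetricSpace) (p : R -> Y) t n :
  poly_sum Y p t (S n) = mdist (p (t O)) (p (t 1%nat)) + poly_sum Y p (fun i => t (S i)) n.
Proof.
  induction n; simpl; [ring|]. simpl in IHn. rewrite IHn. ring.
Qed.

Lemma ps_rev (Y : MetricSpace) (p : R -> Y) n : forall t,
  poly_sum Y p (fun i => t (n - i)%nat) n = poly_sum Y p t n.
Proof.
  induction n; intros t; [reflexivity|].
  rewrite ps_shift. cbn [poly_sum].
  rewrite (ps_ext Y p (fun i => t (S n - S i)%nat) (fun i => t (n - i)%nat)) by (intros; reflexivity).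
  rewrite IHn.
  replace (S n - 0)%nat with (S n) by lia. replace (S n - 1)%nat with n by lia.
  rewrite mdist_sym. ring.
Qed.

Lemma rect_rev (Y : MetricSpace) (p : R -> Y) : rectifiable Y p -> rectifiable Y (fun t => p (1 - t)).
Proof.
  intros [M HM]. exists M. intros n t H0 Hn Hm.
  rewrite ps_comp. rewrite <- ps_rev.
  apply HM.
  - simpl. replace (n - 0)%nat with n by lia. lra.
  - rewrite Nat.sub_diag. lra.
  - intros i Hi. replace (n - i)%nat with (S (n - S i)) by lia.
    specialize (Hm (n - S i)%nat ltac:(lia)). lra.
Qed.

Definition partE (Y : MetricSpace) (p : R -> Y) (s : R) : R -> Prop :=
  fun v => exists n t, t O = 0 /\ t n = s /\ (forall i, (i < n)%nat -> t i <= t (S i)) /\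
     v = poly_sum Y p t n.

Definition plen (Y : MetricSpace) (p : R -> Y) (s : R) : R := real (Lub_Rbar (partE Y p s)).

Lemma partE_snoc (Y : MetricSpace) (p : R -> Y) s s' v : s <= s' -> partE Y p s v ->
  partE Y p s' (v + mdist (p s) (p s')).
Proof.
  intros Hs [n [t [H0 [Hn [Hm ->]]]]].
  exists (S n), (fun i => if Nat.leb i n then t i else s'). split; [|split; [|split]].
  - simpl. auto.
  - replace (Nat.leb (S n) n) with false by (symmetry; apply Nat.leb_gt; lia). auto.
  - intros i Hi. destruct (Nat.eq_dec i n) as [->|Hin].
    + rewrite Nat.leb_refl. replace (Nat.leb (S n) n) with false by (symmetry; apply Nat.leb_gt; lia). lra.
    + replace (Nat.leb i n) with true by (symmetry; apply Nat.leb_le; lia).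
      replace (Nat.leb (S i) n) with true by (symmetry; apply Nat.leb_le; lia). apply Hm. lia.
  - rewrite ps_snoc. rewrite Hn. auto.
Qed.

Lemma plen_props (Y : MetricSpace) (p : R -> Y) (M : R) s :
  (forall (n : nat) (t : nat -> R), t O = 0 -> t n = 1 -> (forall i, (i < n)%nat -> t i <= t (S i)) ->
    poly_sum Y p t n <= M) -> 0 <= s <= 1 ->
  (forall v, partE Y p s v -> v <= plen Y p s) /\
  (forall b, (forall v, partE Y p s v -> v <= b) -> plen Y p s <= b) /\ plen Y p s <= M.
Proof.
  intros HM Hs.
  assert (Hbd : forall v, partE Y p s v -> v <= M).
  { intros v Hv. destruct (partE_snoc Y p s 1 v ltac:(lra) Hv) as [n [t [H0 [Hn [Hm Hv']]]]].
    pose proof (HM n t H0 Hn Hm). pose proof (mdist_ge0 _ (p s) (p 1)). lra. }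
  assert (Hne : partE Y p s (poly_sum Y p (fun i => match i with O => 0 | _ => s end) 1)).
  { exists 1%nat, (fun i => match i with O => 0 | _ => s end). repeat split; auto.
    intros i Hi. replace i with O by lia. lra. }
  destruct (Lub_Rbar_correct (partE Y p s)) as [Hub Hl].
  unfold plen. destruct (Lub_Rbar (partE Y p s)) as [l| |] eqn:El.
  - simpl. split; [|split].
    + intros v Hv. exact (Hub v Hv).
    + intros b Hb. exact (Hl (Finite b) Hb).
    + exact (Hl (Finite M) Hbd).
  - exfalso. exact (Hl (Finite M) Hbd).
  - exfalso. exact (Hub _ Hne).
Qed.

Lemma plen_snoc (Y : MetricSpace) (p : R -> Y) : rectifiable Y p ->
  forall s t, 0 <= s <= t -> t <= 1 -> plen Y p s + mdist (p s) (p t) <= plen Y p t.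
Proof.
  intros [M HM] s t Hst Ht.
  destruct (plen_props Y p M s HM ltac:(lra)) as [_ [Hs _]].
  destruct (plen_props Y p M t HM ltac:(lra)) as [Ht' _].
  assert (plen Y p s <= plen Y p t - mdist (p s) (p t)); [|lra].
  apply Hs. intros v Hv. pose proof (Ht' _ (partE_snoc Y p s t v ltac:(lra) Hv)). lra.
Qed.

Lemma plen_bound (Y : MetricSpace) (p : R -> Y) : rectifiable Y p ->
  exists M, forall s, 0 <= s <= 1 -> plen Y p s <= M.
Proof.
  intros [M HM]. exists M. intros s Hs. apply (plen_props Y p M s HM Hs).
Qed.

Lemma path_bounded (Y : MetricSpace) (p : R -> Y) y : rcont unit_I p ->
  exists M, forall u, 0 <= u <= 1 -> mdist (p u) y <= M.
Proof.
  intros Hp.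
  assert (H : forall u, 0 <= u <= 1 -> exists M, forall v, 0 <= v <= u -> mdist (p v) y <= M).
  2:{ destruct (H 1) as [M HM]; [lra|]. exists M; auto. }
  apply (CI 0 1); [lra|].
  intros s Hs Hbel.
  destruct (rcont_at _ _ Hp s Hs 1) as [d [Hd Hc]]; [lra|].
  set (u0 := Rmax 0 (s - d/2)).
  assert (Hu0 : 0 <= u0) by apply Rmax_l.
  assert (Hu0' : s - d/2 <= u0) by apply Rmax_r.
  assert (Hu0s : u0 <= s) by (unfold u0; apply Rmax_case; lra).
  assert (P0 : exists M, forall v, 0 <= v <= u0 -> mdist (p v) y <= M).
  { destruct (Rlt_dec u0 s) as [Hlt|Hlt]; [apply Hbel; lra|].
    assert (u0 = 0) by (unfold u0 in *; revert Hlt Hu0s; apply Rmax_case; lra).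
    exists (mdist (p 0) y). intros v Hv. replace v with 0 by lra. lra. }
  destruct P0 as [M1 HM1].
  exists d. split; auto. intros u Hu Hus.
  exists (M1 + mdist (p s) y + 1). intros v Hv.
  pose proof (mdist_ge0 _ (p s) y).
  destruct (Rle_dec v u0) as [Hvu|Hvu].
  - specialize (HM1 v ltac:(lra)). lra.
  - assert (Rabs (s - v) < d) by (apply Rabs_def1; lra).
    specialize (Hc v ltac:(unfold unit_I; lra) H0).
    pose proof (mdist_tri _ (p v) (p s) y). rewrite mdist_sym in Hc.
    assert (0 <= M1) by (pose proof (HM1 0 ltac:(lra)); pose proof (mdist_ge0 _ (p 0) y); lra).
    lra.
Qed.

Lemma creep (X Y : MetricSpace) (f : X -> Y) (a : R -> X) (g : R -> Y) (l : R -> R) c s0 q :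
  0 < c -> s0 <= q -> rcont (fun t => s0 <= t <= q) a ->
  (forall u, s0 <= u <= q -> f (a u) = g u) ->
  (forall u, s0 <= u <= q -> exists d, 0 < d /\ forall z, mdist z (a u) < d ->
      c * mdist z (a u) <= mdist (f z) (f (a u))) ->
  (forall s t, s0 <= s <= t -> t <= q -> l s + mdist (g s) (g t) <= l t) ->
  forall u, s0 <= u <= q -> c * mdist (a s0) (a u) <= l u - l s0.
Proof.
  intros Hc Hsq Ha Hf Hest Hl.
  apply (CI s0 q); auto.
  intros tau Ht Hbel.
  destruct (Hest tau Ht) as [d [Hd Hz]].
  destruct (rcont_at _ _ Ha tau Ht d Hd) as [e [He Hce]].
  set (u0 := Rmax s0 (tau - e/2)).
  assert (Hu0 : s0 <= u0) by apply Rmax_l.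
  assert (Hu0' : tau - e/2 <= u0) by apply Rmax_r.
  assert (Hu0s : u0 <= tau) by (unfold u0; apply Rmax_case; lra).
  assert (P0 : c * mdist (a s0) (a u0) <= l u0 - l s0).
  { destruct (Rlt_dec u0 tau) as [Hlt|Hlt]; [apply Hbel; lra|].
    assert (u0 = s0) by (unfold u0 in *; revert Hlt Hu0s; apply Rmax_case; lra).
    rewrite H, md0. lra. }
  exists e. split; auto. intros u Hu Hue.
  destruct (Rlt_dec u tau) as [Hut|Hut]; [apply Hbel; lra|].
  assert (E1 : c * mdist (a u0) (a tau) <= mdist (g u0) (g tau)).
  { rewrite <- Hf, <- Hf by lra. apply Hz.
    rewrite mdist_sym. apply Hce; [lra|]. apply Rabs_def1; lra. }
  assert (E2 : c * mdist (a u) (a tau) <= mdist (g u) (g tau)).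
  { rewrite <- Hf, <- Hf by lra. apply Hz.
    rewrite mdist_sym. apply Hce; [lra|]. apply Rabs_def1; lra. }
  pose proof (Hl u0 tau ltac:(lra) ltac:(lra)).
  pose proof (Hl tau u ltac:(lra) ltac:(lra)).
  pose proof (mdist_tri _ (a s0) (a u0) (a u)).
  pose proof (mdist_tri _ (a u0) (a tau) (a u)).
  rewrite (mdist_sym _ (a tau) (a u)) in H2.
  rewrite (mdist_sym _ (g tau) (g u)) in H0.
  nra.
Qed.

Definition liftP {X Y : MetricSpace} (f : X -> Y) (g : R -> Y) (x : X) (u : R) (b : R -> X) : Prop :=
  rcont (fun t => 0 <= t <= u) b /\ b 0 = x /\ forall t, 0 <= t <= u -> f (b t) = g t.

Lemma ext_lift (X Y : MetricSpace) (f : X -> Y) : local_homeomorphism f ->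
  forall (g : R -> Y) x sig (a : R -> X) xs,
  rcont unit_I g -> 0 <= sig <= 1 ->
  (forall t, 0 <= t < sig -> f (a t) = g t) -> rcont (fun t => 0 <= t < sig) a ->
  (forall eps, 0 < eps -> exists eta, 0 < eta /\ forall t, 0 <= t < sig -> sig - eta < t -> mdist (a t) xs < eps) ->
  f xs = g sig -> (sig = 0 -> xs = x) -> (0 < sig -> a 0 = x) ->
  exists eta, 0 < eta /\ forall u, 0 <= u <= 1 -> u < sig + eta -> exists b, liftP f g x u b.
Proof.
  intros Hl g x sig a xs Hg Hs Hfa Ha Hlim Hxs Hs0 Ha0.
  destruct (lh_at X Y f Hl xs) as [U [V [h [Ux [HU [HV [H1 [H2 [H3 H4]]]]]]]]].
  destruct (HU _ Ux) as [r [Hr Hball]].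
  destruct (HV _ (proj1 (H1 _ Ux))) as [rho [Hrho HballV]].
  rewrite Hxs in HballV.
  destruct (rcont_at _ _ Hg sig Hs rho Hrho) as [e1 [He1 E1]].
  destruct (Hlim r Hr) as [e2 [He2 E2]].
  set (eta := Rmin e1 e2).
  assert (Heta : 0 < eta) by (apply Rmin_case; lra).
  assert (Hm1 : eta <= e1) by apply Rmin_l.
  assert (Hm2 : eta <= e2) by apply Rmin_r.
  assert (Vg : forall t, 0 <= t <= 1 -> sig - eta < t < sig + eta -> V (g t)).
  { intros t Ht Ht2. apply HballV. apply E1; [exact Ht|]. apply Rabs_def1; lra. }
  assert (Ua : forall t, 0 <= t < sig -> sig - eta < t -> a t = h (g t)).
  { intros t Ht Ht2. assert (U (a t)).
    { apply Hball. rewrite mdist_sym. apply E2; auto; lra. }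
    rewrite <- Hfa by auto. symmetry. apply H1; auto. }
  set (b := fun t => if Rlt_dec t (sig - eta/2) then a t else h (g t)).
  assert (Bh : forall t, 0 <= t -> sig - eta < t -> b t = h (g t)).
  { intros t Ht Ht2. unfold b. destruct (Rlt_dec t (sig - eta/2)); auto. apply Ua; lra. }
  assert (Ba : forall t, 0 <= t < sig -> b t = a t).
  { intros t Ht. unfold b. destruct (Rlt_dec t (sig - eta/2)); auto. symmetry; apply Ua; lra. }
  assert (Hhg : rcont (fun t => 0 <= t <= 1 /\ sig - eta < t < sig + eta) (fun t => h (g t))).
  { apply (cont_comp R_metric X Y _ g V h); auto.
    - apply (rcont_sub _ unit_I); auto. intros t [Ht _]; exact Ht.
    - intros t [Ht Ht2]; auto. }
  exists eta. split; auto. intros u Hu Hue. exists b. split; [|split].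
  - apply rcont_intro. intros t Ht eps Heps.
    destruct (Rlt_dec t sig) as [Hts|Hts].
    + destruct (Ha t ltac:(lra) eps Heps) as [d [Hd Hc]].
      exists (Rmin d (sig - t)). split; [apply Rmin_case; lra|].
      intros t' Ht' Htt. assert (Rmin d (sig - t) <= d) by apply Rmin_l.
      assert (Rmin d (sig - t) <= sig - t) by apply Rmin_r.
      apply Rabs_def2 in Htt.
      rewrite Ba, Ba by lra. apply Hc; [lra|]. apply Rabs_def1; lra.
    + destruct (Hhg t ltac:(split; lra) eps Heps) as [d [Hd Hc]].
      exists (Rmin d (Rmin (sig + eta - t) eta)). split; [repeat apply Rmin_case; lra|].
      intros t' Ht' Htt.
      assert (Rmin d (Rmin (sig + eta - t) eta) <= d) by apply Rmin_l.
      assert (Rmin d (Rmin (sig + eta - t) eta) <= Rmin (sig + eta - t) eta) by apply Rmin_r.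
      assert (Rmin (sig + eta - t) eta <= sig + eta - t) by apply Rmin_l.
      assert (Rmin (sig + eta - t) eta <= eta) by apply Rmin_r.
      apply Rabs_def2 in Htt.
      rewrite Bh, Bh by lra. apply Hc; [split; lra|]. apply Rabs_def1; lra.
  - destruct (Req_dec sig 0) as [E0|E0].
    + rewrite Bh by lra. rewrite E0 in Hxs. rewrite <- Hxs. rewrite (proj2 (H1 _ Ux)). auto.
    + rewrite Ba by lra. apply Ha0. lra.
  - intros t Ht. destruct (Rlt_dec t sig) as [Hts|Hts].
    + rewrite Ba by lra. apply Hfa; lra.
    + rewrite Bh by lra. apply H2. apply Vg; lra.
Qed.

Lemma tau_props (sig ts : R) : 0 < sig -> ts < sig ->
  (forall n, 0 <= sig - sig / (INR n + 2) < sig) /\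
  exists N, forall n, (N <= n)%nat -> ts <= sig - sig / (INR n + 2).
Proof.
  intros Hs Hts. split.
  - intros n. pose proof (pos_INR n).
    assert (0 < sig / (INR n + 2)) by (apply Rdiv_lt_0_compat; lra).
    assert (sig / (INR n + 2) <= sig); [|lra].
    apply (Rmult_le_reg_r (INR n + 2)); [lra|].
    unfold Rdiv. rewrite Rmult_assoc, Rinv_l by lra. nra.
  - destruct (INR_archimed (sig - ts) sig) as [N HN]; [lra|].
    exists N. intros n Hn. apply le_INR in Hn.
    assert (sig / (INR n + 2) <= sig - ts); [|lra].
    apply (Rmult_le_reg_r (INR n + 2)); [pose proof (pos_INR n); lra|].
    unfold Rdiv. rewrite Rmult_assoc, Rinv_l by (pose proof (pos_INR n); lra). nra.
Qed.

Lemma lift_exists (X Y : MetricSpace) (f : X -> Y) : local_homeomorphism f -> m_complete X ->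
  (forall B : X -> Prop, m_bounded B ->
     Rbar_lt (Finite 0) (Rbar_glb (fun v => exists x, B x /\ v = lower_deriv f x))) ->
  (exists (y0 : Y) (x0 : X), forall M, exists N, forall x,
     mdist x x0 > N -> mdist (f x) y0 > M) ->
  forall (g : R -> Y) x, rcont unit_I g -> rectifiable Y g -> f x = g 0 ->
  exists a, liftP f g x 1 a.
Proof.
  intros Hl Hcomp HD Hpr g x Hg Hrect Hx.
  destruct Hpr as [y0 [x0 Hpr]].
  destruct (path_bounded Y g y0 Hg) as [My HMy].
  destruct (Hpr My) as [N HN].
  set (B := fun z => mdist z x0 <= N).
  assert (HBb : m_bounded B).
  { exists (N + N). intros a b Ba Bb. unfold B in *.
    pose proof (mdist_tri _ a x0 b). rewrite (mdist_sym _ x0 b) in H. lra. }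
  destruct (bounded_c X Y f B (HD B HBb)) as [c [Hc0 HcB]].
  assert (Hinb : forall z t, 0 <= t <= 1 -> f z = g t -> B z).
  { intros z t Ht Hz. unfold B. apply Rnot_lt_le. intro Hlt.
    specialize (HN z Hlt). rewrite Hz in HN. specialize (HMy t Ht). lra. }
  destruct (plen_bound Y g Hrect) as [Ml HMl].
  set (l := plen Y g).
  assert (Hls : forall s t, 0 <= s <= t -> t <= 1 -> l s + mdist (g s) (g t) <= l t)
    by (apply plen_snoc; auto).
  assert (Hall : forall u, 0 <= u <= 1 -> exists b, liftP f g x u b).
  2:{ apply Hall; lra. }
  apply (CI 0 1); [lra|]. intros sig Hs Hbel.
  destruct (Req_dec sig 0) as [E0|E0].
  { apply (ext_lift X Y f Hl g x sig (fun _ => x) x Hg Hs).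
    - intros t Ht; exfalso; lra.
    - intros t Ht; exfalso; lra.
    - intros eps Heps. exists 1. split; [lra|]. intros t Ht; exfalso; lra.
    - rewrite E0; auto.
    - auto.
    - intros; lra. }
  assert (Hsp : 0 < sig) by lra.
  set (inh := inhabits (fun _ : R => x)).
  set (L := fun u => epsilon inh (fun b => liftP f g x u b)).
  assert (HL : forall u, 0 <= u < sig -> liftP f g x u (L u)).
  { intros u Hu. apply epsilon_spec. apply Hbel; lra. }
  set (a := fun t => L ((t + sig) / 2) t).
  assert (Hagree : forall t w, 0 <= t <= w -> w < sig -> L w t = a t).
  { intros t w Htw Hw. unfold a.
    set (w' := (t + sig) / 2).
    destruct (HL w ltac:(lra)) as [C1 [S1 F1]].
    destruct (HL w' ltac:(unfold w'; lra)) as [C2 [S2 F2]].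
    apply (lift_unique X Y f Hl 0 (Rmin w w')).
    - apply Rmin_case; unfold w'; lra.
    - apply (rcont_sub _ (fun t => 0 <= t <= w)); auto. intros v Hv.
      assert (Rmin w w' <= w) by apply Rmin_l. lra.
    - apply (rcont_sub _ (fun t => 0 <= t <= w')); auto. intros v Hv.
      assert (Rmin w w' <= w') by apply Rmin_r. lra.
    - intros v Hv. assert (Rmin w w' <= w) by apply Rmin_l. assert (Rmin w w' <= w') by apply Rmin_r.
      rewrite F1, F2; auto; lra.
    - congruence.
    - split; [lra|]. apply Rmin_case; unfold w'; lra. }
  assert (Ha0 : a 0 = x).
  { unfold a. destruct (HL ((0 + sig) / 2) ltac:(lra)) as [_ [S1 _]]. auto. }
  assert (Hfa : forall t, 0 <= t < sig -> f (a t) = g t).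
  { intros t Ht. unfold a. destruct (HL ((t + sig) / 2) ltac:(lra)) as [_ [_ F1]]. apply F1. lra. }
  assert (Hac : rcont (fun t => 0 <= t < sig) a).
  { apply rcont_intro. intros t Ht eps Heps.
    set (w := (t + sig) / 2).
    destruct (HL w ltac:(unfold w; lra)) as [C1 _].
    destruct (rcont_at _ _ C1 t ltac:(unfold w; lra) eps Heps) as [d [Hd Hcd]].
    exists (Rmin d (w - t)). split; [apply Rmin_case; unfold w; lra|].
    intros t' Ht' Htt. assert (Rmin d (w - t) <= d) by apply Rmin_l.
    assert (Rmin d (w - t) <= w - t) by apply Rmin_r. apply Rabs_def2 in Htt.
    rewrite <- (Hagree t w), <- (Hagree t' w) by (unfold w in *; lra).
    apply Hcd; [lra|]. apply Rabs_def1; lra. }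
  assert (HaB : forall t, 0 <= t < sig -> B (a t)).
  { intros t Ht. apply (Hinb _ t); [lra|]. apply Hfa; auto. }
  assert (Hcreep : forall s t, 0 <= s <= t -> t < sig -> c * mdist (a s) (a t) <= l t - l s).
  { intros s t Hst Hts.
    apply (creep X Y f a g l c s t); auto; try lra.
    - apply (rcont_sub _ (fun t => 0 <= t < sig)); auto. intros; lra.
    - intros u Hu. apply Hfa; lra.
    - intros u Hu. apply deriv_est. apply HcB. apply HaB. lra.
    - intros s' t' H1 H2. apply Hls; lra. }
  set (E := fun v => exists t, 0 <= t < sig /\ v = l t).
  assert (HEb : bound E). { exists Ml. intros v [t [Ht ->]]. apply HMl. lra. }
  assert (HE0 : E (l 0)) by (exists 0; split; [lra|reflexivity]).
  destruct (completeness E HEb (ex_intro _ (l 0) HE0))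
    as [Lam [HLub HLl]].
  assert (Hmono : forall s t, 0 <= s <= t -> t < sig -> l s <= l t).
  { intros s t H1 H2. pose proof (Hls s t H1 ltac:(lra)). pose proof (mdist_ge0 _ (g s) (g t)). lra. }
  assert (Hcauchy : forall eps, 0 < eps -> exists ts, 0 <= ts < sig /\
     forall t t', ts <= t < sig -> ts <= t' < sig -> mdist (a t) (a t') < eps).
  { intros eps Heps.
    assert (Hex : exists ts, 0 <= ts < sig /\ Lam - c * eps < l ts).
    { apply NNPP; intro Hn.
      assert (Lam <= Lam - c * eps); [|nra].
      apply HLl. intros v [t [Ht ->]]. apply Rnot_lt_le. intro Hlt. apply Hn. exists t; auto. }
    destruct Hex as [ts [Hts Hlts]]. exists ts. split; auto.
    assert (Hw : forall t t', ts <= t <= t' -> t' < sig -> mdist (a t) (a t') < eps).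
    { intros t t' H1 H2. pose proof (Hcreep t t' ltac:(lra) H2).
      assert (HEt : E (l t')) by (exists t'; split; [lra|reflexivity]).
      pose proof (HLub (l t') HEt).
      pose proof (Hmono ts t ltac:(lra) ltac:(lra)).
      apply (Rmult_lt_reg_l c); auto. lra. }
    intros t t' H1 H2. destruct (Rle_dec t t').
    - apply Hw; lra.
    - rewrite mdist_sym. apply Hw; lra. }
  set (tau := fun n : nat => sig - sig / (INR n + 2)).
  assert (Htau : forall n, 0 <= tau n < sig) by (intro n; apply (tau_props sig 0); lra).
  destruct (Hcomp (fun n => a (tau n))) as [xs Hxs].
  { intros eps Heps. destruct (Hcauchy eps Heps) as [ts [Hts Hw]].
    destruct (tau_props sig ts Hsp ltac:(lra)) as [_ [N' HN']].
    exists N'. intros m n Hm Hn. pose proof (HN' m Hm). pose proof (HN' n Hn).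
    pose proof (Htau m). pose proof (Htau n). unfold tau in *. apply Hw; lra. }
  assert (Hlim : forall eps, 0 < eps -> exists eta, 0 < eta /\
     forall t, 0 <= t < sig -> sig - eta < t -> mdist (a t) xs < eps).
  { intros eps Heps. destruct (Hcauchy (eps/2)) as [ts [Hts Hw]]; [lra|].
    destruct (tau_props sig ts Hsp ltac:(lra)) as [_ [N1 HN1]].
    destruct (Hxs (eps/2)) as [N2 HN2]; [lra|].
    exists (sig - ts). split; [lra|]. intros t Ht Ht2.
    set (n := Nat.max N1 N2).
    specialize (HN1 n (Nat.le_max_l _ _)). specialize (HN2 n (Nat.le_max_r _ _)).
    specialize (Htau n). unfold tau in *.
    pose proof (Hw t (sig - sig / (INR n + 2)) ltac:(lra) ltac:(lra)).
    pose proof (mdist_tri _ (a t) (a (sig - sig / (INR n + 2))) xs). cbv beta in HN2. lra. }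
  assert (Hfxs : f xs = g sig).
  { apply md_small_eq. intros eps Heps.
    destruct (fcont_at X Y f Hl xs (eps/2)) as [d1 [Hd1 Hf1]]; [lra|].
    destruct (rcont_at _ _ Hg sig Hs (eps/2)) as [d2 [Hd2 Hg2]]; [lra|].
    destruct (Hlim d1 Hd1) as [eta [Heta Hl2]].
    set (t := Rmax 0 (sig - Rmin eta d2 / 2)).
    assert (Hm0 : 0 < Rmin eta d2) by (apply Rmin_case; lra).
    assert (Hm1 : Rmin eta d2 <= eta) by apply Rmin_l.
    assert (Hm2 : Rmin eta d2 <= d2) by apply Rmin_r.
    assert (Ht1 : 0 <= t) by apply Rmax_l.
    assert (Ht2 : sig - Rmin eta d2 / 2 <= t) by apply Rmax_r.
    assert (Ht3 : t < sig) by (unfold t; apply Rmax_case; lra).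
    specialize (Hl2 t ltac:(lra) ltac:(lra)). rewrite mdist_sym in Hl2.
    specialize (Hf1 _ Hl2). rewrite Hfa in Hf1 by lra.
    assert (Rabs (sig - t) < d2) by (apply Rabs_def1; lra).
    specialize (Hg2 t ltac:(unfold unit_I; lra) H).
    pose proof (mdist_tri _ (f xs) (g t) (g sig)). rewrite (mdist_sym _ (g t) (g sig)) in H0. lra. }
  apply (ext_lift X Y f Hl g x sig a xs); auto.
  intros; lra.
Qed.

Definition jcont {Y : MetricSpace} (U : Y -> Prop) (H : Y -> R -> Y) : Prop :=
  forall y t, U y -> unit_I t -> forall eps, 0 < eps -> exists delta, 0 < delta /\
       forall y' t', U y' -> unit_I t' -> mdist y y' < delta -> Rabs (t - t') < delta ->
         mdist (H y t) (H y' t') < eps.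

Lemma jcont_path {Y : MetricSpace} (U : Y -> Prop) (H : Y -> R -> Y) w :
  jcont U H -> U w -> rcont unit_I (H w).
Proof.
  intros HJ Uw. apply rcont_intro. intros t Ht eps Heps.
  destruct (HJ w t Uw Ht eps Heps) as [d [Hd Hc]]. exists d. split; auto.
  intros u Hu Htu. apply Hc; auto. rewrite md0; auto.
Qed.

Lemma rcont_rev {Y : MetricSpace} (p : R -> Y) : rcont unit_I p -> rcont unit_I (fun t => p (1 - t)).
Proof.
  intros Hp. apply rcont_intro. intros t Ht eps Heps. unfold unit_I in *.
  destruct (rcont_at _ _ Hp (1 - t) ltac:(unfold unit_I; lra) eps Heps) as [d [Hd Hc]].
  exists d. split; auto. intros u Hu Htu. apply Hc; [unfold unit_I; lra|].
  replace (1 - t - (1 - u)) with (- (t - u)) by ring. rewrite Rabs_Ropp. auto.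
Qed.

Lemma lift_rev {X Y : MetricSpace} (f : X -> Y) g x a : liftP f g x 1 a ->
  liftP f (fun t => g (1 - t)) (a 1) 1 (fun t => a (1 - t)).
Proof.
  intros [Hc [H0 Hf]]. split; [|split].
  - apply (rcont_rev a Hc).
  - simpl. replace (1 - 0) with 1 by ring. auto.
  - intros t Ht. apply Hf. lra.
Qed.

Lemma hop (X Y : MetricSpace) (f : X -> Y) : local_homeomorphism f -> m_complete X ->
  (forall B : X -> Prop, m_bounded B ->
     Rbar_lt (Finite 0) (Rbar_glb (fun v => exists x, B x /\ v = lower_deriv f x))) ->
  (exists (y0 : Y) (x0 : X), forall M, exists N, forall x,
     mdist x x0 > N -> mdist (f x) y0 > M) ->
  forall (U : Y -> Prop) (H : Y -> R -> Y) y, jcont U H ->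
  (forall w, U w -> H w 0 = y /\ H w 1 = w) -> (forall w, U w -> rectifiable Y (H w)) ->
  forall w0 w z0, U w0 -> U w -> f z0 = w0 -> exists z, f z = w.
Proof.
  intros Hl Hc HD Hpr U H y HJ HH Hr w0 w z0 U0 Uw Hz0.
  destruct (lift_exists X Y f Hl Hc HD Hpr (fun t => H w0 (1 - t)) z0) as [a1 [C1 [S1 F1]]].
  - apply rcont_rev. apply (jcont_path U H); auto.
  - apply rect_rev. auto.
  - replace (1 - 0) with 1 by ring. rewrite (proj2 (HH w0 U0)). auto.
  - destruct (lift_exists X Y f Hl Hc HD Hpr (H w) (a1 1)) as [a2 [C2 [S2 F2]]].
    + apply (jcont_path U H); auto.
    + auto.
    + rewrite F1 by lra. replace (1 - 1) with 0 by ring. rewrite (proj1 (HH w0 U0)), (proj1 (HH w Uw)). auto.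
    + exists (a2 1). rewrite F2 by lra. apply HH; auto.
Qed.

Lemma surj (X Y : MetricSpace) (f : X -> Y) : local_homeomorphism f -> m_complete X ->
  path_connected Y -> locally_R_contractible Y ->
  (forall B : X -> Prop, m_bounded B ->
     Rbar_lt (Finite 0) (Rbar_glb (fun v => exists x, B x /\ v = lower_deriv f x))) ->
  (exists (y0 : Y) (x0 : X), forall M, exists N, forall x,
     mdist x x0 > N -> mdist (f x) y0 > M) ->
  forall y, exists x, f x = y.
Proof.
  intros Hl Hc Hpc Hrc HD Hpr y.
  destruct Hpr as [y0 [x0 Hpr']].
  destruct (Hpc (f x0) y) as [p [Hp [Hp0 Hp1]]].
  assert (Hall : forall u, 0 <= u <= 1 -> exists z, f z = p u).
  2:{ rewrite <- Hp1. apply Hall; lra. }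
  apply (CI 0 1); [lra|]. intros s Hs Hbel.
  destruct (Hrc (p s)) as [U [H [Us [HUo [_ [HJ [_ [HH HR]]]]]]]].
  destruct (HUo _ Us) as [r [Hr Hball]].
  destruct (rcont_at _ _ Hp s Hs r Hr) as [eta [Heta Hce]].
  set (u0 := Rmax 0 (s - eta/2)).
  assert (Hu0 : 0 <= u0) by apply Rmax_l.
  assert (Hu0' : s - eta/2 <= u0) by apply Rmax_r.
  assert (Hu0s : u0 <= s) by (unfold u0; apply Rmax_case; lra).
  assert (P0 : exists z, f z = p u0).
  { destruct (Rlt_dec u0 s) as [Hlt|Hlt]; [apply Hbel; lra|].
    assert (u0 = 0) by (unfold u0 in *; revert Hlt Hu0s; apply Rmax_case; lra).
    rewrite H0, Hp0. exists x0; auto. }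
  destruct P0 as [z0 Hz0].
  exists eta. split; auto. intros u Hu Hue.
  destruct (Rlt_dec u s) as [Hus|Hus]; [apply Hbel; lra|].
  apply (hop X Y f Hl Hc HD (ex_intro _ y0 (ex_intro _ x0 Hpr')) U H (p s) HJ HH HR (p u0) (p u) z0); auto.
  - apply Hball, Hce; [unfold unit_I; lra|]. apply Rabs_def1; lra.
  - apply Hball, Hce; [unfold unit_I; lra|]. apply Rabs_def1; lra.
Qed.

Lemma lift_cont (X Y : MetricSpace) (f : X -> Y) : local_homeomorphism f ->
  forall (U : Y -> Prop) (H : Y -> R -> Y) (al : Y -> R -> X) x,
  jcont U H -> (forall w, U w -> liftP f (H w) x 1 (al w)) ->
  forall w0, U w0 -> forall eps, 0 < eps -> exists delta, 0 < delta /\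
    forall w, U w -> mdist w0 w < delta -> mdist (al w0 1) (al w 1) < eps.
Proof.
  intros Hl U H al x HJ Hal w0 U0.
  assert (Hall : forall s, 0 <= s <= 1 -> forall eps, 0 < eps -> exists delta, 0 < delta /\
    forall w, U w -> mdist w0 w < delta -> mdist (al w s) (al w0 s) < eps).
  2:{ intros eps Heps. destruct (Hall 1 ltac:(lra) eps Heps) as [d [Hd Hw]].
      exists d. split; auto. intros w Uw Hw0. rewrite mdist_sym. auto. }
  apply (CI 0 1 (fun s => forall eps, 0 < eps -> exists delta, 0 < delta /\
    forall w, U w -> mdist w0 w < delta -> mdist (al w s) (al w0 s) < eps)); [lra|]. intros sig Hs Hbel.
  destruct (Hal w0 U0) as [C0 [S0 F0]].
  set (z := al w0 sig).
  destruct (lh_at X Y f Hl z) as [Uz [Vz [gz [Ux [HU [HV [H1 [H2 [H3 H4]]]]]]]]].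
  destruct (HU _ Ux) as [r [Hr Hball]].
  destruct (HV _ (proj1 (H1 _ Ux))) as [rho [Hrho HballV]].
  unfold z in HballV. rewrite F0 in HballV by lra.
  destruct (HJ w0 sig U0 Hs rho Hrho) as [e1 [He1 E1]].
  destruct (rcont_at _ _ C0 sig Hs (r/2)) as [e2 [He2 E2]]; [lra|].
  set (eta := Rmin e1 e2).
  assert (Heta : 0 < eta) by (apply Rmin_case; lra).
  assert (Hm1 : eta <= e1) by apply Rmin_l.
  assert (Hm2 : eta <= e2) by apply Rmin_r.
  set (u0 := Rmax 0 (sig - eta/2)).
  assert (Hu0 : 0 <= u0) by apply Rmax_l.
  assert (Hu0' : sig - eta/2 <= u0) by apply Rmax_r.
  assert (Hu0s : u0 <= sig) by (unfold u0; apply Rmax_case; lra).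
  set (q := Rmin (sig + eta/2) 1).
  assert (Hq1 : q <= sig + eta/2) by apply Rmin_l.
  assert (Hq2 : q <= 1) by apply Rmin_r.
  assert (Hq3 : sig <= q) by (unfold q; apply Rmin_case; lra).
  assert (P0 : forall eps, 0 < eps -> exists delta, 0 < delta /\
    forall w, U w -> mdist w0 w < delta -> mdist (al w u0) (al w0 u0) < eps).
  { destruct (Rlt_dec u0 sig) as [Hlt|Hlt]; [apply Hbel; lra|].
    assert (E : u0 = 0) by (unfold u0 in *; revert Hlt Hu0s; apply Rmax_case; lra).
    intros eps Heps. exists 1. split; [lra|]. intros w Uw _. rewrite E.
    destruct (Hal w Uw) as [_ [Sw _]]. rewrite Sw, S0, md0. auto. }
  destruct (P0 (r/2)) as [d0 [Hd0 D0]]; [lra|].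
  assert (Vin : forall w u, U w -> mdist w0 w < e1 -> 0 <= u <= 1 -> Rabs (sig - u) < e1 -> Vz (H w u)).
  { intros w u Uw Hw Hu Hsu. apply HballV. apply E1; auto. }
  assert (Heq : forall w, U w -> mdist w0 w < Rmin d0 e1 -> forall u, u0 <= u <= q -> al w u = gz (H w u)).
  { intros w Uw Hw.
    assert (Hd0' : Rmin d0 e1 <= d0) by apply Rmin_l.
    assert (He1' : Rmin d0 e1 <= e1) by apply Rmin_r.
    destruct (Hal w Uw) as [Cw [Sw Fw]].
    apply (lift_unique X Y f Hl u0 q); [lra| | | |].
    - apply (rcont_sub _ (fun t => 0 <= t <= 1)); auto. intros; lra.
    - apply (cont_comp R_metric X Y _ (H w) Vz gz); auto.
      + apply (rcont_sub _ unit_I); [|apply (jcont_path U H); auto]. intros t Ht. unfold unit_I; lra.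
      + intros t Ht. apply Vin; auto; try lra. apply Rabs_def1; lra.
    - intros u Hu. rewrite Fw by lra. symmetry. apply H2. apply Vin; auto; try lra. apply Rabs_def1; lra.
    - assert (Ua : Uz (al w u0)).
      { apply Hball. pose proof (mdist_tri _ z (al w0 u0) (al w u0)) as T1.
        assert (T2 : mdist z (al w0 u0) < r/2).
        { unfold z. apply E2; [lra|]. apply Rabs_def1; lra. }
        pose proof (D0 w Uw ltac:(lra)) as T3. rewrite mdist_sym in T3. lra. }
      rewrite <- (Fw u0) by lra. symmetry. apply H1. auto. }
  exists (eta/2). split; [lra|]. intros u Hu Hue.
  destruct (Rlt_dec u sig) as [Hus|Hus]; [apply Hbel; lra|].
  intros eps Heps.
  assert (Vu : Vz (H w0 u)) by (apply Vin; auto; [rewrite md0; lra|apply Rabs_def1; lra]).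
  destruct (H4 _ Vu eps Heps) as [k [Hk Hgk]].
  destruct (HJ w0 u U0 Hu k Hk) as [d1 [Hd1 D1]].
  exists (Rmin (Rmin d0 e1) d1). split; [repeat apply Rmin_case; lra|].
  intros w Uw Hw.
  assert (Rmin (Rmin d0 e1) d1 <= Rmin d0 e1) by apply Rmin_l.
  assert (Rmin (Rmin d0 e1) d1 <= d1) by apply Rmin_r.
  assert (Rmin d0 e1 <= e1) by apply Rmin_r.
  assert (Hu' : u0 <= u <= q) by (split; [lra|]; unfold q; apply Rmin_case; lra).
  rewrite (Heq w Uw ltac:(lra) u Hu'), (Heq w0 U0 ltac:(rewrite md0; apply Rmin_case; lra) u Hu').
  rewrite mdist_sym. apply Hgk.
  - apply Vin; auto; [lra|apply Rabs_def1; lra].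
  - apply D1; auto; [lra|]. rewrite Rminus_diag, Rabs_R0. auto.
Qed.

Theorem mainTheorem12 (X Y : MetricSpace) (f : X -> Y) :
  no_isolated_points X ->
  m_complete X ->
  path_connected Y ->
  locally_R_contractible Y ->
  local_homeomorphism f ->
  (forall B : X -> Prop, m_bounded B ->
     Rbar_lt (Finite 0) (Rbar_glb (fun v => exists x, B x /\ v = lower_deriv f x))) ->
  (exists (y0 : Y) (x0 : X), forall M, exists N, forall x,
     mdist x x0 > N -> mdist (f x) y0 > M) ->
  covering_projection f.
Proof.
  intros _ Hc Hpc Hrc Hl HD Hpr.
  split; [apply lh_cont; auto|]. split; [apply (surj X Y f); auto|].
  intros y.
  destruct (Hrc y) as [U [H [Uy [HUo [_ [HJ [Hc0 [HH HR]]]]]]]].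
  exists U. split; auto. split; auto.
  destruct Hpr as [y0 [x0 Hpr']].
  assert (Hpr : exists (y0 : Y) (x0 : X), forall M, exists N, forall x,
     mdist x x0 > N -> mdist (f x) y0 > M) by eauto.
  set (inh := inhabits (fun _ : R => x0)).
  set (al := fun (x : X) (w : Y) => epsilon inh (fun a => liftP f (H w) x 1 a)).
  assert (Hal : forall x, f x = y -> forall w, U w -> liftP f (H w) x 1 (al x w)).
  { intros x Hx w Uw. apply epsilon_spec.
    apply (lift_exists X Y f Hl Hc HD Hpr).
    - apply (jcont_path U H); auto.
    - auto.
    - rewrite (proj1 (HH w Uw)). auto. }
  set (I := {x : X | f x = y}).
  set (sx := fun (i : I) w => al (proj1_sig i) w 1).
  set (W := fun (i : I) z => U (f z) /\ sx i (f z) = z).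
  assert (Hsf : forall i w, U w -> f (sx i w) = w).
  { intros [x Hx] w Uw. unfold sx; simpl. destruct (Hal x Hx w Uw) as [_ [_ F]].
    rewrite F by lra. apply HH; auto. }
  assert (Hcont : forall i, m_continuous_on U (sx i)).
  { intros [x Hx] w0 U0 eps Heps.
    destruct (lift_cont X Y f Hl U H (al x) x HJ (Hal x Hx) w0 U0 eps Heps) as [d [Hd Hw]].
    exists d. split; auto. }
  exists I, W. split; [|split; [|split]].
  -
    intros i z [Uz Hz].
    destruct (lh_at X Y f Hl z) as [Uz' [Vz [gz [Ux [HU [HV [H1 [H2 [H3 H4]]]]]]]]].
    destruct (HU _ Ux) as [r [Hr Hball]].
    destruct (HUo _ Uz) as [rho [Hrho HballU]].
    destruct (fcont_at X Y f Hl z rho Hrho) as [d1 [Hd1 D1]].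
    destruct (Hcont i (f z) Uz r Hr) as [k [Hk K]].
    destruct (fcont_at X Y f Hl z k Hk) as [d2 [Hd2 D2]].
    exists (Rmin (Rmin d1 d2) r). split; [repeat apply Rmin_case; lra|].
    intros z' Hzz.
    assert (Rmin (Rmin d1 d2) r <= Rmin d1 d2) by apply Rmin_l.
    assert (Rmin (Rmin d1 d2) r <= r) by apply Rmin_r.
    assert (Rmin d1 d2 <= d1) by apply Rmin_l.
    assert (Rmin d1 d2 <= d2) by apply Rmin_r.
    assert (Uz2 : U (f z')) by (apply HballU, D1; lra).
    split; auto.
    assert (Ua : Uz' (sx i (f z'))).
    { apply Hball. rewrite <- Hz at 1. apply K; auto. apply D2; lra. }
    assert (Ub : Uz' z') by (apply Hball; lra).
    pose proof (proj2 (H1 _ Ua)) as E1. pose proof (proj2 (H1 _ Ub)) as E2.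
    rewrite Hsf in E1 by auto. congruence.
  -
    intros i j z Wi Wj. destruct i as [x Hx]. destruct j as [x' Hx'].
    destruct Wi as [Uz Hz]. destruct Wj as [_ Hz'].
    unfold sx in Hz, Hz'; simpl in Hz, Hz'.
    set (w := f z) in *.
    pose proof (lift_rev f _ _ _ (Hal x Hx w Uz)) as R1.
    pose proof (lift_rev f _ _ _ (Hal x' Hx' w Uz)) as R2.
    rewrite Hz in R1. rewrite Hz' in R2.
    destruct R1 as [C1 [S1 F1]]. destruct R2 as [C2 [S2 F2]].
    assert (E : al x w (1 - 1) = al x' w (1 - 1)).
    { apply (lift_unique X Y f Hl 0 1 (fun t => al x w (1 - t)) (fun t => al x' w (1 - t))); auto; try lra.
      - intros u Hu. rewrite F1, F2; auto.
      - congruence. }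
    replace (1 - 1) with 0 in E by ring.
    destruct (Hal x Hx w Uz) as [_ [S3 _]]. destruct (Hal x' Hx' w Uz) as [_ [S4 _]].
    assert (x = x') by congruence. subst x'. f_equal. apply proof_irrelevance.
  -
    intros z. split.
    + intros Uz. set (w := f z) in *.
      destruct (lift_exists X Y f Hl Hc HD Hpr (fun t => H w (1 - t)) z) as [b [Cb [Sb Fb]]].
      * apply rcont_rev. apply (jcont_path U H); auto.
      * apply rect_rev; auto.
      * replace (1 - 0) with 1 by ring. rewrite (proj2 (HH w Uz)). auto.
      * assert (Hx : f (b 1) = y).
        { rewrite Fb by lra. replace (1 - 1) with 0 by ring. apply HH; auto. }
        exists (exist _ (b 1) Hx). split; auto.
        unfold sx; simpl. fold w.
        destruct (Hal (b 1) Hx w Uz) as [Ca [Sa Fa]].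
        assert (E : al (b 1) w 1 = b (1 - 1)).
        { apply (lift_unique X Y f Hl 0 1 (al (b 1) w) (fun t => b (1 - t))); auto; try lra.
          - apply (rcont_rev b Cb).
          - intros u Hu. rewrite Fa, Fb by lra. f_equal. ring.
          - rewrite Sa. f_equal. ring. }
        rewrite E. replace (1 - 1) with 0 by ring. auto.
    + intros [i [Uz _]]. auto.
  -
    intros i. exists (sx i). split; [|split; [|split]].
    + intros z [Uz Hz]. auto.
    + intros w Uw. assert (E := Hsf i w Uw). split; [split|]; [rewrite E; auto | rewrite E; reflexivity | exact E].
    + apply (cont_sub X Y (W i) (fun _ => True)); auto. apply lh_cont; auto.
    + apply Hcont.
Qed.
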